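(* There is an injective ring homomorphism $\iota:\Lambda_0\to\mathcal C(\mathbb Z_p,A_{\mathfrak p})$ induced by $[u]\mapsto(s\mapsto u^s)$ for $u\in1+\mathfrak pA_{\mathfrak p}$ and extended $A_{\mathfrak p}$-linearly. Moreover, for every dense subset $I\subset\mathbb Z_p$, the set of ideals $\{P_k\}_{k\in I}$ is Zariski dense in $\Lambda_0$ (i.e. $\bigcap_{k\in I}P_k=0$).
   Context: $A=\mathbb F_q[T]$ with $q$ a power of the prime $p$, $\varpi$ monic irreducible, $\mathfrak p=(\varpi)$, $A_{\mathfrak p}$ the completion. $\Lambda_0=A_{\mathfrak p}\llbracket1+\mathfrak pA_{\mathfrak p}\rrbracket=\varprojlim_mA_{\mathfrak p}/\mathfrak p^m[(1+\mathfrak p)/(1+\mathfrak p^m)]$ is the Iwasawa algebra of the pro-$p$ group $1+\mathfrak pA_{\mathfrak p}$ (a $\mathbb Z_p$-module, so $u^s$ makes sense for $s\in\mathbb Z_p$). $\mathcal C(\mathbb Z_p,A_{\mathfrak p})$ is the ring of continuous functions $\mathbb Z_p\to A_{\mathfrak p}$. For $k\in\mathbb Z_p$, $P_k=\ker(f_k)$ where $f_k:\Lambda_0\to A_{\mathfrak p}$ is the continuous $A_{\mathfrak p}$-algebra map with $[u]\mapsto u^k$. *)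

(* Defs.v *)
(* Concrete model of A_p = F_q[T]_(w) (completion), Z_p,
   the Iwasawa algebra Lambda_0 = lim_m A_p/p^m[(1+p)/(1+p^m)],
   continuous functions Z_p -> A_p, the map iotaL and the maps f_k. *)
From HB Require Import structures.
From mathcomp Require Import all_boot all_order all_algebra.
Set Implicit Arguments. Unset Strict Implicit. Unset Printing Implicit Defensive.
Import Order.TTheory GRing.Theory Num.Theory.
Local Open Scope ring_scope.

Section Iwasawa.
Variables (F : finFieldType) (w : {poly F}).

(* Level m of every inverse system is "modulo w^(m+1)". *)
Definition modl (m : nat) : {poly F} := w ^+ m.+1.
Definition dg : nat := (size w).-1.

(* Residues modulo w^(m+1), encoded by their coefficient vectors
   (a finite type, used to index the group ring at level m). *)
Definition Res (m : nat) := {ffun 'I_(dg * m.+1) -> F}.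
Definition toP m (r : Res m) : {poly F} := \sum_(i < dg * m.+1) r i *: 'X^i.
Definition ofP m (a : {poly F}) : Res m := [ffun i : 'I_(dg * m.+1) => (a %% modl m)`_i].
Definition punit m (r : Res m) : bool := w %| (toP r - 1).

Definition Ap := nat -> {poly F}.
Definition isAp (x : Ap) : Prop :=
  forall m, x m %% modl m = x m /\ x m.+1 %% modl m = x m.
Definition Ap_zero : Ap := fun _ => 0.
Definition Ap_add (x y : Ap) : Ap := fun m => x m + y m.
Definition Ap_mul (x y : Ap) : Ap := fun m => (x m * y m) %% modl m.
Definition Ap_one : Ap := fun m => 1 %% modl m.
Definition principal (u : Ap) : Prop := isAp u /\ w %| (u 0%N - 1).

(* At level m, an element of (A/w^(m+1))[(1+p)/(1+p^(m+1))] is a function on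
   residues, supported on principal-unit residues, with reduced values. *)
Definition Lam := forall m : nat, {ffun Res m -> {poly F}}.
Definition isLam (l : Lam) : Prop :=
  [/\ forall m r, l m r %% modl m = l m r,
      forall m r, ~~ punit r -> l m r = 0
    & forall m (g : Res m),
        l m g = (\sum_(h : Res m.+1 | ofP m (toP h) == g) l m.+1 h) %% modl m].

Definition Lam_zero : Lam := fun m => [ffun _ => 0].
Definition Lam_add (l1 l2 : Lam) : Lam := fun m => [ffun r => l1 m r + l2 m r].
Definition Lam_one : Lam :=
  fun m => [ffun r => if r == ofP m 1 then 1 %% modl m else 0].
Definition Lam_mul (l1 l2 : Lam) : Lam :=
  fun m => [ffun r =>
    (\sum_(g : Res m | punit g)
       \sum_(h : Res m | punit h && (ofP m (toP g * toP h) == r))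
          l1 m g * l2 m h) %% modl m].
Definition Lam_scale (a : Ap) (l : Lam) : Lam :=
  fun m => [ffun r => (a m * l m r) %% modl m].
Definition dirac (u : Ap) : Lam :=
  fun m => [ffun r => if r == ofP m (u m) then 1 %% modl m else 0].

Section Zp.
Variable p : nat.
(* s m = s mod p^(m+1) *)
Definition isZp (s : nat -> nat) : Prop :=
  forall m, (s m < p ^ m.+1)%N /\ (s m.+1 %% p ^ m.+1)%N = s m.
Definition Zp_dense (I : (nat -> nat) -> Prop) : Prop :=
  forall s, isZp s -> forall n, exists t, [/\ I t, isZp t & t n = s n].
Definition continuousZA (f : (nat -> nat) -> Ap) : Prop :=
  forall s, isZp s -> forall m, exists n,
    forall t, isZp t -> t n = s n -> f t m = f s m.
End Zp.

Definition upow (u : Ap) (s : nat -> nat) : Ap :=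
  fun m => (u m ^+ s m) %% modl m.

Definition iotaL (l : Lam) : (nat -> nat) -> Ap :=
  fun s m => (\sum_(g : Res m | punit g) l m g * toP g ^+ s m) %% modl m.
(* f_k : Lambda_0 -> A_p, [u] |-> u^k, extended A_p-linearly and continuously *)
Definition fk (k : nat -> nat) (l : Lam) : Ap :=
  fun m => (\sum_(g : Res m | punit g) l m g * toP g ^+ k m) %% modl m.
Definition inP (k : nat -> nat) (l : Lam) : Prop :=
  isLam l /\ forall m, fk k l m = 0.

End Iwasawa.

(* Main.v *)
Require Import Defs.
From HB Require Import structures.
From mathcomp Require Import all_boot all_order all_algebra.
From mathcomp Require Import ring.
Import GRing.Theory.
Local Open Scope ring_scope.
Set Implicit Arguments. Unset Strict Implicit. Unset Printing Implicit Defensive.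

Section Basics.
Variables (F : finFieldType) (w : {poly F}).
Hypothesis Hmonic : w \is monic.
Hypothesis Hirr : irreducible_poly w.
Implicit Types a b : {poly F}.

Lemma w_neq0 : w != 0. Proof. exact: irredp_neq0. Qed.
Lemma size_w : (1 < size w)%N. Proof. by case: Hirr. Qed.

Lemma modl_neq0 m : modl w m != 0.
Proof. by rewrite /modl expf_neq0 // w_neq0. Qed.

Lemma size_modl m : size (modl w m) = (dg w * m.+1).+1.
Proof.
have h := size_exp w m.+1.
rewrite /modl /dg -h prednK //.
by rewrite size_poly_gt0 expf_neq0 // w_neq0.
Qed.

Lemma size_mod m a : (size (a %% modl w m)%R <= dg w * m.+1)%N.
Proof. by rewrite -ltnS -size_modl ltn_modp modl_neq0. Qed.

Lemma toP_ofP m a : toP (ofP w m a) = a %% modl w m.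
Proof.
rewrite /toP /ofP.
under eq_bigr do rewrite ffunE.
rewrite -poly_def; apply/polyP => i; rewrite coef_poly.
case: ifP => // /negbT; rewrite -leqNgt => hi.
by rewrite nth_default // (leq_trans (size_mod m a) hi).
Qed.

Lemma size_toP m (r : Res w m) : (size (toP r) <= dg w * m.+1)%N.
Proof.
rewrite /toP; apply: (leq_trans (size_sum _ _ _)).
apply/bigmax_leqP => i _.
apply: (leq_trans (size_scale_leq _ _)); rewrite size_polyXn; exact: ltn_ord.
Qed.

Lemma coef_toP m (r : Res w m) (i : 'I_(dg w * m.+1)) : (toP r)`_i = r i.
Proof.
rewrite /toP coef_sum (bigD1 i) //= coefZ coefXn eqxx mulr1 big1 ?addr0 //.
move=> j hj; rewrite coefZ coefXn.
suff -> : (nat_of_ord i == nat_of_ord j) = false by rewrite mulr0.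
by apply/negbTE; rewrite eq_sym (inj_eq val_inj).
Qed.

Lemma toP_mod m (r : Res w m) : toP r %% modl w m = toP r.
Proof. by rewrite modp_small // size_modl ltnS size_toP. Qed.

Lemma ofP_toP m (r : Res w m) : ofP w m (toP r) = r.
Proof. by apply/ffunP => i; rewrite ffunE toP_mod coef_toP. Qed.

Lemma toP_inj m : injective (@toP F w m).
Proof. by move=> r s e; rewrite -(ofP_toP r) e ofP_toP. Qed.

Lemma ofP_mod m a : ofP w m (a %% modl w m) = ofP w m a.
Proof. by apply/ffunP => i; rewrite !ffunE modp_id. Qed.

Lemma ofP_eq m a b : (ofP w m a == ofP w m b) = (a %% modl w m == b %% modl w m).
Proof.
apply/eqP/eqP => [e|e]; last by rewrite -ofP_mod e ofP_mod.
by rewrite -!toP_ofP e.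
Qed.

Lemma modl_dvd m n : (m <= n)%N -> modl w m %| modl w n.
Proof. by move=> h; rewrite /modl dvdp_exp2l. Qed.

Lemma modp_modl m n a : (m <= n)%N -> (a %% modl w n) %% modl w m = a %% modl w m.
Proof.
move=> h; have := modl_dvd h; move/dvdpP => [q eq].
rewrite {2}(divp_eq a (modl w n)) modpD eq mulrA modp_mull add0r //.
Qed.

Lemma ofP_modl m n a : (m <= n)%N -> ofP w m (a %% modl w n) = ofP w m a.
Proof. by move=> h; apply/ffunP => i; rewrite !ffunE modp_modl. Qed.

Lemma dvd_sub_mod d m a : d %| modl w m -> d %| a %% modl w m - a.
Proof.
move=> h; rewrite {2}(divp_eq a (modl w m)) opprD addrCA subrr addr0 dvdpNr //.
exact: dvdp_mull.
Qed.

Section Cong.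
Variable d : {poly F}.
Lemma modp_sum (I : finType) (P : pred I) (f : I -> {poly F}) :
  (\sum_(i | P i) f i) %% d = \sum_(i | P i) (f i %% d).
Proof. by apply: (big_morph (fun x => x %% d)) => [x y|]; rewrite ?modpD ?mod0p. Qed.

Lemma cong_sum (I : finType) (P : pred I) (f g : I -> {poly F}) :
  (forall i, P i -> f i %% d = g i %% d) ->
  (\sum_(i | P i) f i) %% d = (\sum_(i | P i) g i) %% d.
Proof. by move=> h; rewrite !modp_sum; apply: eq_bigr. Qed.

Lemma modp_mull' a b : ((a %% d) * b) %% d = (a * b) %% d.
Proof. by rewrite mulrC modp_mul mulrC. Qed.

Lemma cong_mul a a' b b' : a %% d = a' %% d -> b %% d = b' %% d ->
  (a * b) %% d = (a' * b') %% d.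
Proof.
move=> ha hb; transitivity ((a' * b) %% d); first by rewrite -modp_mull' ha modp_mull'.
by rewrite -modp_mul hb modp_mul.
Qed.

Lemma modp_exp a k : ((a %% d) ^+ k) %% d = a ^+ k %% d.
Proof.
elim: k => [|k ih]; first by rewrite !expr0.
by rewrite !exprS; apply: cong_mul => //; rewrite modp_id.
Qed.

Lemma cong_exp a b k : a %% d = b %% d -> a ^+ k %% d = b ^+ k %% d.
Proof. by move=> h; rewrite -modp_exp h modp_exp. Qed.

Lemma modp_eqP a b : (a %% d = b %% d) <-> (d %| a - b).
Proof.
split => [h|h]; first by apply/modp_eq0P; rewrite modpD modpN h subrr.
by apply/eqP; rewrite -subr_eq0 -modpN -modpD; apply/eqP/modp_eq0P.
Qed.
End Cong.

Lemma punit_ofP m a : punit (ofP w m a) = (w %| a - 1).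
Proof.
rewrite /punit toP_ofP.
have h : w %| a %% modl w m - a.
  apply: dvd_sub_mod; rewrite /modl; exact: dvdp_exp2l (isT : (1 <= m.+1)%N).
by rewrite -[RHS](dvdp_addr _ h) addrA addrNK.
Qed.

Lemma punit_rho m (h : Res w m.+1) : punit (ofP w m (toP h)) = punit h.
Proof. by rewrite punit_ofP. Qed.

Lemma sum_drop (l : Lam w) m (P : pred (Res w m)) (G : Res w m -> {poly F}) :
  (forall g, ~~ P g -> l m g = 0) ->
  \sum_(g | P g) l m g * G g = \sum_g l m g * G g.
Proof.
move=> h; rewrite big_mkcond; apply: eq_bigr => g _.
by case: ifP => // /negbT /h ->; rewrite mul0r.
Qed.

Lemma push (l : Lam w) m (G : Res w m -> {poly F}) : isLam l ->
  (\sum_(h : Res w m.+1) l m.+1 h * G (ofP w m (toP h))) %% modl w m =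
  (\sum_(g : Res w m) l m g * G g) %% modl w m.
Proof.
case=> _ _ hc.
rewrite (partition_big (fun h => ofP w m (toP h)) predT) //=.
apply: cong_sum => g _.
rewrite (eq_bigr (fun h => l m.+1 h * G g)); last by move=> h /eqP ->.
rewrite -big_distrl /= hc; apply: cong_mul => //; rewrite modp_id.
by [].
Qed.

Lemma push' (l : Lam w) m (G : Res w m -> {poly F}) (G' : Res w m.+1 -> {poly F}) :
  isLam l -> (forall h, G' h = G (ofP w m (toP h))) ->
  (\sum_(h : Res w m.+1) l m.+1 h * G' h) %% modl w m =
  (\sum_(g : Res w m) l m g * G g) %% modl w m.
Proof. by move=> L e; rewrite -push //; congr (_ %% _); apply: eq_bigr => h _; rewrite e. Qed.

Lemma sum_if (I : finType) (P : pred I) (h0 : I) (c : {poly F}) :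
  \sum_(h | P h) (if h == h0 then c else 0) = if P h0 then c else 0.
Proof.
rewrite -big_mkcondr /=; case: ifP => hP.
  by rewrite (big_pred1 h0) // => h /=; case: (h =P h0) => [->|]; rewrite ?hP ?andbF.
by rewrite big_pred0 // => h; case: (h =P h0) => [->|]; rewrite ?hP ?andbF.
Qed.

Lemma rho_ofP m a : ofP w m (toP (ofP w m.+1 a)) = ofP w m a.
Proof. by rewrite toP_ofP ofP_modl. Qed.

Lemma isLam_zero : isLam (Lam_zero w).
Proof.
split=> [m r|m r _|m g]; rewrite /Lam_zero ?ffunE ?mod0p //.
by rewrite big1 ?mod0p // => h _; rewrite ffunE.
Qed.

Lemma isLam_one : isLam (Lam_one w).
Proof.
split=> [m r|m r|m g]; rewrite /Lam_one ?ffunE.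
- by case: ifP; rewrite ?modp_id ?mod0p.
- by move=> hr; case: eqP => // e; move: hr; rewrite e punit_ofP subrr dvdp0.
under eq_bigr do rewrite ffunE.
rewrite sum_if rho_ofP [ofP w m 1 == g]eq_sym.
by case: ifP; rewrite ?mod0p ?modp_modl.
Qed.

Lemma isLam_add (l1 l2 : Lam w) : isLam l1 -> isLam l2 -> isLam (Lam_add l1 l2).
Proof.
case=> h1 s1 c1 [h2 s2 c2].
split=> [m r|m r hr|m g]; rewrite /Lam_add ?ffunE.
- by rewrite modpD h1 h2.
- by rewrite s1 ?s2 ?addr0.
under eq_bigr do rewrite ffunE.
by rewrite big_split /= modpD -c1 -c2.
Qed.

Lemma isLam_scale (a : Ap F) (l : Lam w) : isAp w a -> isLam l -> isLam (Lam_scale a l).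
Proof.
move=> ha [h1 s1 c1].
split=> [m r|m r hr|m g]; rewrite /Lam_scale ?ffunE.
- by rewrite modp_id.
- by rewrite s1 ?mulr0 ?mod0p.
under eq_bigr do rewrite ffunE.
rewrite (c1 m g) modp_mul.
transitivity ((\sum_(i | ofP w m (toP i) == g) (a m.+1 * l m.+1 i)) %% modl w m).
  rewrite -big_distrr /=; apply: cong_mul => //.
  by case: (ha m) => -> ->.
by apply: cong_sum => h _; rewrite modp_modl.
Qed.

Lemma principal_dvd (u : Ap F) : principal w u -> forall m, w %| u m - 1.
Proof.
case=> hu h0; elim=> // m ih.
have hd : w %| u m.+1 %% modl w m - u m.+1.
  apply: dvd_sub_mod; rewrite /modl; exact: dvdp_exp2l (isT : (1 <= m.+1)%N).
case: (hu m) => _ e; rewrite e in hd.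
have -> : u m.+1 - 1 = - (u m - u m.+1) + (u m - 1).
  by rewrite opprB addrA subrK.
by rewrite dvdp_add // dvdpNr.
Qed.

Lemma isLam_dirac (u : Ap F) : principal w u -> isLam (dirac w u).
Proof.
move=> hu; have hd := principal_dvd hu; case: hu => hu _.
split=> [m r|m r|m g]; rewrite /dirac ?ffunE.
- by case: ifP; rewrite ?modp_id ?mod0p.
- by move=> hr; case: eqP => // e; move: hr; rewrite e punit_ofP hd.
under eq_bigr do rewrite ffunE.
rewrite sum_if rho_ofP -[ofP w m (u m.+1)]ofP_mod; case: (hu m) => _ ->.
rewrite [ofP w m (u m) == g]eq_sym.
by case: ifP; rewrite ?mod0p ?modp_modl.
Qed.

Lemma punit_mul m (g h : Res w m) : punit g -> punit h -> punit (ofP w m (toP g * toP h)).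
Proof.
rewrite punit_ofP /punit => pg ph.
have -> : toP g * toP h - 1 = (toP g - 1) * toP h + (toP h - 1).
  by rewrite mulrBl mul1r addrA subrK.
by rewrite dvdp_add // dvdp_mulr.
Qed.

Definition supp (l : Lam w) := forall m (r : Res w m), ~~ punit r -> l m r = 0.

Lemma mul_nf (l1 l2 : Lam w) m r : supp l1 -> supp l2 ->
  Lam_mul l1 l2 m r = (\sum_g \sum_h l1 m g * l2 m h *
      (ofP w m (toP g * toP h) == r)%:R) %% modl w m.
Proof.
move=> s1 s2; rewrite /Lam_mul ffunE; congr (_ %% _).
rewrite big_mkcond; apply: eq_bigr => g _.
case: ifP => pg; last first.
  by rewrite big1 // => h _; rewrite s1 ?pg // !mul0r.
rewrite big_mkcond; apply: eq_bigr => h _.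
case: (boolP (punit h)) => ph /=; last by rewrite s2 // mulr0 mul0r.
by case: eqP; rewrite ?mulr1 ?mulr0.
Qed.

Lemma sum_ind (I : finType) (P : pred I) (x : I) :
  \sum_(k | P k) ((x == k)%:R : {poly F}) = (P x)%:R.
Proof.
rewrite (eq_bigr (fun k => if k == x then 1 else 0)); last by move=> k _; rewrite eq_sym; case: eqP.
by rewrite sum_if; case: (P x).
Qed.

Lemma ofP_mulmodl m a b : ofP w m ((a %% modl w m) * b) = ofP w m (a * b).
Proof. by apply/eqP; rewrite ofP_eq modp_mull'. Qed.
Lemma ofP_mulmodr m a b : ofP w m (a * (b %% modl w m)) = ofP w m (a * b).
Proof. by apply/eqP; rewrite ofP_eq modp_mul. Qed.

Lemma isLam_mul (l1 l2 : Lam w) : isLam l1 -> isLam l2 -> isLam (Lam_mul l1 l2).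
Proof.
move=> L1 L2; have L1' := L1; have L2' := L2.
case: L1' => h1 s1 c1; case: L2' => h2 s2 c2.
split=> [m r|m r hr|m r].
- by rewrite /Lam_mul ffunE modp_id.
- rewrite /Lam_mul ffunE big1 ?mod0p // => g pg; rewrite big1 // => h /andP[ph /eqP e].
  by move: hr; rewrite -e punit_mul.
rewrite [LHS]mul_nf //.
under [in RHS]eq_bigr do rewrite mul_nf //.
rewrite -(cong_sum (f := fun k => \sum_g \sum_h l1 m.+1 g * l2 m.+1 h *
      (ofP w m.+1 (toP g * toP h) == k)%:R)); last by move=> k _; rewrite modp_modl.
symmetry; rewrite (exchange_big_dep predT) //=.
rewrite (eq_bigr (fun g => l1 m.+1 g * \sum_h l2 m.+1 h *
      (ofP w m (toP g * toP h) == r)%:R)); last first.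
  move=> g _; rewrite (exchange_big_dep predT) //= big_distrr /=; apply: eq_bigr => h _.
  rewrite (eq_bigl (fun i => ofP w m (toP i) == r)); last by move=> i; rewrite !andbT.
  by rewrite -big_distrr /= sum_ind /= rho_ofP mulrA.
rewrite (push' (G := fun g => \sum_h l2 m.+1 h * (ofP w m (toP g * toP h) == r)%:R) L1); last first.
  by move=> g /=; rewrite toP_ofP; under [in RHS]eq_bigr do rewrite ofP_mulmodl.
apply: cong_sum => g _.
rewrite -modp_mul (push' (G := fun h => (ofP w m (toP g * toP h) == r)%:R) L2); last first.
  by move=> h /=; rewrite toP_ofP ofP_mulmodr.
rewrite modp_mul big_distrr /=.
by congr (_ %% _); apply: eq_bigr => h _; rewrite mulrA.
Qed.

Lemma sum_ifd (I : finType) (P : pred I) (h0 : I) (f : I -> {poly F}) :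
  \sum_(h | P h) (if h == h0 then f h else 0) = if P h0 then f h0 else 0.
Proof.
rewrite (eq_bigr (fun h => if h == h0 then f h0 else 0)); first exact: sum_if.
by move=> h _; case: eqP => // ->.
Qed.

Lemma sum_ind_f (I : finType) (x : I) (f : I -> {poly F}) :
  \sum_r (x == r)%:R * f r = f x.
Proof.
rewrite (eq_bigr (fun r => if r == x then f r else 0)); first by rewrite sum_ifd.
by move=> r _; rewrite eq_sym; case: eqP; rewrite ?mul1r ?mul0r.
Qed.

Lemma supp_isLam (l : Lam w) : isLam l -> supp l.
Proof. by case. Qed.

Lemma iota_nf (l : Lam w) s m : supp l ->
  iotaL l s m = (\sum_g l m g * toP g ^+ s m) %% modl w m.
Proof. by move=> sl; rewrite /iotaL [in LHS]sum_drop // => g; apply: sl. Qed.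

Variable p : nat.
Hypothesis Hp : p \in [pchar F].

Lemma p_gt1 : (1 < p)%N.
Proof. exact/prime_gt1/(pcharf_prime Hp). Qed.

Lemma frob u k : w %| u - 1 -> w ^+ (p ^ k) %| u ^+ (p ^ k) - 1.
Proof.
move=> hu.
have hpP : p \in [pchar {poly F}] by rewrite pchar_poly.
have hnat : [pchar {poly F}].-nat (p ^ k)%N.
  by rewrite pnatX (pnatE _ (pcharf_prime hpP)) hpP.
have -> : u ^+ (p ^ k) - 1 = (u - 1) ^+ (p ^ k).
  by rewrite exprDn_pchar // exprNn_pchar // expr1n.
exact: dvdp_exp2r.
Qed.

Lemma period u m j (a : nat) : w %| u - 1 ->
  u ^+ (j * p ^ m.+1 + a) %% modl w m = u ^+ a %% modl w m.
Proof.
move=> hu.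
have h1 : u ^+ (p ^ m.+1) %% modl w m = 1 %% modl w m.
  apply/modp_eqP; apply: dvdp_trans (frob m.+1 hu).
  by rewrite /modl dvdp_exp2l // ltnW // ltn_expl // p_gt1.
rewrite exprD mulnC exprM.
transitivity ((1 * u ^+ a) %% modl w m); last by rewrite mul1r.
apply: cong_mul => //.
by rewrite (cong_exp _ h1) expr1n.
Qed.

Lemma iota_isAp (l : Lam w) s : isLam l -> isZp p s -> isAp w (iotaL l s).
Proof.
move=> L hs m; split; first by rewrite /iotaL modp_id.
have sl := supp_isLam L.
rewrite !iota_nf // modp_modl //.
rewrite (cong_sum (g := fun h => l m.+1 h * toP (ofP w m (toP h)) ^+ s m)); last first.
  move=> h _; case: (boolP (punit h)) => ph; last by rewrite sl // !mul0r.
  apply: cong_mul => //; rewrite toP_ofP modp_exp.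
  case: (hs m) => _ e; rewrite -e {1}(divn_eq (s m.+1) (p ^ m.+1)).
  exact: period.
rewrite (push' (G := fun g => toP g ^+ s m) L) //.
Qed.

Lemma iota_cont (l : Lam w) : continuousZA p (iotaL l).
Proof. by move=> s hs m; exists m => t ht e; rewrite /iotaL e. Qed.

Lemma one_mod m : 1 %% modl w m = 1.
Proof. by rewrite modp_small // size_poly1 size_modl ltnS muln_gt0 /dg -subn1 subn_gt0 size_w. Qed.

Lemma iota_one s m : iotaL (Lam_one w) s m = Ap_one w m.
Proof.
rewrite /iotaL /Ap_one.
rewrite (eq_bigr (fun g => if g == ofP w m 1 then (1 %% modl w m) * toP g ^+ s m else 0)); last first.
  by move=> g _; rewrite ffunE; case: ifP; rewrite ?mul0r.
rewrite sum_ifd punit_ofP subrr dvdp0 toP_ofP !one_mod.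
by rewrite expr1n mul1r one_mod.
Qed.

Lemma iota_add (l1 l2 : Lam w) s m :
  iotaL (Lam_add l1 l2) s m = Ap_add (iotaL l1 s) (iotaL l2 s) m.
Proof.
rewrite /iotaL /Ap_add -modpD -big_split /=; congr (_ %% _).
by apply: eq_bigr => g _; rewrite ffunE mulrDl.
Qed.

Lemma iota_scale (a : Ap F) (l : Lam w) s m :
  iotaL (Lam_scale a l) s m = Ap_mul w a (iotaL l s) m.
Proof.
rewrite /iotaL /Ap_mul modp_mul big_distrr /=.
apply: cong_sum => g _; rewrite ffunE modp_mull' mulrA //.
Qed.

Lemma iota_dirac (u : Ap F) s m : principal w u ->
  iotaL (dirac w u) s m = upow w u s m.
Proof.
move=> hu; rewrite /iotaL /upow.
rewrite (eq_bigr (fun g => if g == ofP w m (u m) then (1 %% modl w m) * toP g ^+ s m else 0)); last first.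
  by move=> g _; rewrite ffunE; case: ifP; rewrite ?mul0r.
by rewrite sum_ifd punit_ofP (principal_dvd hu) toP_ofP one_mod mul1r modp_exp.
Qed.

Lemma iota_mul (l1 l2 : Lam w) s m : isLam l1 -> isLam l2 ->
  iotaL (Lam_mul l1 l2) s m = Ap_mul w (iotaL l1 s) (iotaL l2 s) m.
Proof.
move=> L1 L2; have s1 := supp_isLam L1; have s2 := supp_isLam L2.
have s12 := supp_isLam (isLam_mul L1 L2).
rewrite /Ap_mul !iota_nf //.
rewrite [RHS]modp_mul [RHS]modp_mull'.
rewrite (cong_sum (g := fun r => (\sum_g \sum_h l1 m g * l2 m h *
      (ofP w m (toP g * toP h) == r)%:R) * toP r ^+ s m)); last first.
  by move=> r _; rewrite mul_nf // modp_mull'.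
have E : \sum_r (\sum_g \sum_h l1 m g * l2 m h *
      (ofP w m (toP g * toP h) == r)%:R) * toP r ^+ s m =
   \sum_g \sum_h l1 m g * l2 m h * toP (ofP w m (toP g * toP h)) ^+ s m.
  under eq_bigr do rewrite big_distrl /=.
  rewrite exchange_big /=; apply: eq_bigr => g _.
  under eq_bigr do rewrite big_distrl /=.
  rewrite exchange_big /=; apply: eq_bigr => h _.
  under eq_bigr do rewrite -mulrA.
  by rewrite -big_distrr /= sum_ind_f.
rewrite E big_distrl /=; apply: cong_sum => g _.
rewrite big_distrr /=; apply: cong_sum => h _.
have -> : l1 m g * toP g ^+ s m * (l2 m h * toP h ^+ s m) =
   l1 m g * l2 m h * (toP g * toP h) ^+ s m.
  by rewrite exprMn mulrA -[l1 m g * _ * l2 m h]mulrA [toP g ^+ _ * _]mulrC !mulrA.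
by apply: cong_mul => //; rewrite toP_ofP modp_exp.
Qed.

Lemma dvdp_sumP (I : finType) (P : pred I) (d : {poly F}) (f : I -> {poly F}) :
  (forall i, P i -> d %| f i) -> d %| \sum_(i | P i) f i.
Proof. move=> h; apply: (big_ind (fun x => d %| x)); [exact: dvdp0 | exact: dvdp_add | exact: h]. Qed.

Lemma push_iter (l : Lam w) m (G : Res w m -> {poly F}) M : isLam l -> (m <= M)%N ->
  (\sum_(h : Res w M) l M h * G (ofP w m (toP h))) %% modl w m =
  (\sum_(g : Res w m) l m g * G g) %% modl w m.
Proof.
move=> L; elim: M => [|M ih].
  rewrite leqn0 => /eqP e; subst m.
  by congr (_ %% _); apply: eq_bigr => h _; rewrite ofP_toP.
rewrite leq_eqVlt => /orP[/eqP e|hle].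
  by subst m; congr (_ %% _); apply: eq_bigr => h _; rewrite ofP_toP.
have hle' : (m <= M)%N := hle.
rewrite -(ih hle').
rewrite -(modp_modl _ hle') -[in RHS](modp_modl _ hle').
congr (_ %% _).
apply: (@push' l M (fun g => G (ofP w m (toP g)))) => // h.
by rewrite toP_ofP ofP_modl.
Qed.

Lemma coprime_w y : ~~ (w %| y) -> coprimep w y.
Proof.
move=> hy; rewrite coprimep_def; apply/negPn/negP => hs.
have e := Hirr.2 _ hs (dvdp_gcdl w y).
by move: hy; rewrite -(eqp_dvdl _ e) dvdp_gcdr.
Qed.

Lemma exists_E c : exists E, (c <= E)%N /\
  forall y, ~~ (w %| y) -> w ^+ c %| y ^+ E - 1.
Proof.
pose K := #|{: Res w c}|.
exists (K`! * c.+1)%N; split.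
  by rewrite -{1}[c]mul1n leq_mul // ?fact_gt0.
move=> y hy.
have hdiv : w ^+ c %| modl w c by rewrite /modl dvdp_exp2l.
apply: dvdp_trans hdiv _.
pose f (i : 'I_K.+1) := ofP w c (y ^+ i).
have : ~~ injectiveb f.
  apply/negP => /injectiveP hi; have := leq_card f hi.
  by rewrite card_ord ltnn.
case/injectivePn => i [j hij eij].
have key : forall (a b : nat), (a < b)%N -> (b < K.+1)%N ->
   ofP w c (y ^+ a) = ofP w c (y ^+ b) ->
   (0 < b - a <= K)%N /\ modl w c %| y ^+ (b - a) - 1.
  move=> a b hab hb e; split.
    by rewrite subn_gt0 hab /= (leq_trans (leq_subr _ _)).
  move/eqP: e; rewrite ofP_eq => /eqP /esym /modp_eqP.
  have -> : y ^+ b - y ^+ a = y ^+ a * (y ^+ (b - a) - 1).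
    by rewrite mulrBr mulr1 -exprD subnKC // ltnW.
  rewrite Gauss_dvdpr //.
  by rewrite /modl coprimep_expl // coprimep_expr // coprime_w.
have [a0 [ha0 hd0]] : exists a0 : nat, (0 < a0 <= K)%N /\ modl w c %| y ^+ a0 - 1.
  case: (ltngtP i j) => hij'.
  - by exists (j - i)%N; apply: key => //; rewrite ?ltn_ord.
  - by exists (i - j)%N; apply: key => //; rewrite ?ltn_ord.
  - by move: hij; rewrite (val_inj hij') eqxx.
have hfa : (a0 %| K`!)%N by apply: dvdn_fact.
have -> : (K`! * c.+1 = a0 * (K`! %/ a0 * c.+1))%N.
  by rewrite mulnA [(a0 * _)%N]mulnC divnK.
apply/modp_eqP; rewrite exprM (cong_exp _ (proj2 (modp_eqP _ _ _) hd0)).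
by rewrite expr1n.
Qed.

Lemma pair_zero (l : Lam w) : isLam l ->
  (forall s, isZp p s -> forall m, iotaL l s m = 0) ->
  forall M (Q : {poly {poly F}}), (size Q <= p ^ M.+1)%N ->
  modl w M %| \sum_h l M h * Q.[toP h].
Proof.
move=> L H M Q hQ.
rewrite (eq_bigr (fun h => \sum_(i < size Q) Q`_i * (l M h * toP h ^+ i))); last first.
  by move=> h _; rewrite horner_coef big_distrr /=; apply: eq_bigr => i _; rewrite mulrCA.
rewrite exchange_big /=; apply: dvdp_sumP => i _; rewrite -big_distrr /=; apply: dvdp_mull.
have hp0 : (0 < p)%N by rewrite ltnW // p_gt1.
have hs : isZp p (fun t => (i %% p ^ t.+1)%N).
  move=> t; split; first by rewrite ltn_pmod // expn_gt0 hp0.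
  by rewrite modn_dvdm // dvdn_exp2l.
have := H _ hs M; rewrite (iota_nf _ _ (supp_isLam L)) modn_small; last first.
  exact: leq_trans (ltn_ord i) hQ.
by move/modp_eq0P.
Qed.

Lemma claim j c : exists n (P : {poly {poly F}}), forall z, w %| z ->
  w ^+ (n + c) %| P.[z] - w ^+ n * (dvdp (w ^+ j.+1) z)%:R.
Proof.
elim: j c => [|j ih] c.
  exists 0%N, 1 => z hz; rewrite -polyC1 hornerC expr1 hz mulr1 expr0 subrr.
  exact: dvdp0.
have [E [hcE hE]] := exists_E c.
have [n [P hP]] := ih (j.+1 * E + c)%N.
exists (n + j.+1 * E)%N, (P * ((w ^+ (j.+1 * E))%:P - 'X^E)) => z hz.
rewrite hornerM hornerD hornerN hornerC hornerXn.
have [a ha] := dvdpP _ _ (hP z hz).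
have e1 : w ^+ (n + (j.+1 * E + c)) = w ^+ n * (w ^+ (j.+1 * E) * w ^+ c).
  by rewrite exprD [w ^+ (_ + c)]exprD.
have e2 : w ^+ (n + j.+1 * E + c) = w ^+ n * (w ^+ (j.+1 * E) * w ^+ c).
  by rewrite -addnA e1.
have e3 : w ^+ (n + j.+1 * E) = w ^+ n * w ^+ (j.+1 * E) by rewrite exprD.
rewrite e1 in ha; rewrite e2 e3.
case: (boolP (w ^+ j.+1 %| z)) => hJ; last first.
  have hJ' : (w ^+ j.+2 %| z) = false.
    apply/negP => h; move/negP: hJ; apply; apply: dvdp_trans h.
    exact: dvdp_exp2l.
  rewrite (negbTE hJ) mulr0n mulr0 subr0 in ha.
  rewrite hJ' mulr0n mulr0 subr0 ha; apply/dvdpP; exists (a * (w ^+ (j.+1 * E) - z ^+ E)); ring.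
rewrite hJ mulr1n mulr1 in ha.
have [y hy] := dvdpP _ _ hJ.
have hwJ : w ^+ j.+1 != 0 by rewrite expf_neq0 // w_neq0.
have et : (w ^+ j.+2 %| z) = (w %| y) by rewrite hy exprS dvdp_mul2r.
have hb : w ^+ c %| (1 - y ^+ E) - (dvdp w y)%:R.
  case: (boolP (w %| y)) => hwy /=.
    rewrite mulr1n addrAC subrr add0r dvdpNr.
    apply: dvdp_trans (dvdp_exp2l w hcE) (dvdp_exp2r E hwy).
  by rewrite mulr0n subr0 -opprB dvdpNr hE.
have [b hb'] := dvdpP _ _ hb.
have ez : z ^+ E = y ^+ E * w ^+ (j.+1 * E) by rewrite hy exprMn -exprM mulnC.
have eP : P.[z] = w ^+ n + a * (w ^+ n * (w ^+ (j.+1 * E) * w ^+ c)) by rewrite -ha addrC subrK.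
have eY : y ^+ E = 1 - (dvdp w y)%:R - b * w ^+ c by rewrite -hb'; ring.
rewrite et eP ez eY.
apply/dvdpP; exists (b + a * ((dvdp w y)%:R * w ^+ (j.+1 * E) + b * w ^+ (j.+1 * E) * w ^+ c)); ring.
Qed.

Lemma ofP_eq_dvd m a (r : Res w m) : (ofP w m a == r) = (w ^+ m.+1 %| a - toP r).
Proof.
rewrite -{1}(ofP_toP r) ofP_eq toP_mod.
apply/eqP/idP => h.
  by apply/(modp_eqP (modl w m)); rewrite h toP_mod.
by rewrite -[RHS](toP_mod r); apply/(modp_eqP (modl w m)).
Qed.

Lemma injective_iota (l : Lam w) : isLam l ->
  (forall s, isZp p s -> forall m, iotaL l s m = 0) ->
  forall m r, l m r = 0.
Proof.
move=> L H m r; have sl := supp_isLam L.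
case: (boolP (punit r)) => pr; last exact: sl.
have [n [P hP]] := claim m m.+1.
pose Q := P \Po ('X - (toP r)%:P).
pose M := maxn (n + m) (size Q).
have hQ : (size Q <= p ^ M.+1)%N.
  apply: leq_trans (leq_maxr (n + m) _) _.
  apply: leq_trans (leqnSn _) _; exact: ltnW (ltn_expl _ p_gt1).
have h1 := pair_zero L H hQ.
have hnm : (n + m <= M)%N by apply: leq_maxl.
have h2 : w ^+ (n + m.+1) %| \sum_h l M h * Q.[toP h].
  by apply: dvdp_trans h1; rewrite addnS; exact: modl_dvd.
pose X := \sum_h l M h * (ofP w m (toP h) == r)%:R.
have h3 : w ^+ (n + m.+1) %| \sum_h l M h * Q.[toP h] - w ^+ n * X.
  rewrite /X big_distrr /= -sumrB; apply: dvdp_sumP => h _.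
  case: (boolP (punit h)) => ph; last by rewrite sl // !(mul0r, mulr0) subrr dvdp0.
  rewrite mulrCA -mulrBr; apply: dvdp_mull.
  have hz : w %| toP h - toP r.
    have -> : toP h - toP r = (toP h - 1) - (toP r - 1) by rewrite opprB addrA subrK.
    exact: dvdp_sub.
  by rewrite horner_comp hornerXsubC ofP_eq_dvd; exact: hP.
have h4 : w ^+ (n + m.+1) %| w ^+ n * X by rewrite -(dvdp_subr _ h2).
have hle : (m <= M)%N by apply: leq_trans (leq_addl n m) hnm.
have Li := L; case: Li => hmod _ _.
have h5 : X %% modl w m = l m r.
  rewrite /X (push_iter (fun g => (g == r)%:R) L hle).
  rewrite (eq_bigr (fun g => (r == g)%:R * l m g)) ?sum_ind_f ?hmod //.
  by move=> g _; rewrite mulrC eq_sym.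
have h6 : w ^+ m.+1 %| X - l m r.
  by apply/(modp_eqP (modl w m)); rewrite h5 hmod.
have h7 : w ^+ (n + m.+1) %| w ^+ n * l m r.
  have -> : w ^+ n * l m r = w ^+ n * X - w ^+ n * (X - l m r).
    by rewrite mulrBr opprB addrC subrK.
  by rewrite dvdp_sub // exprD dvdp_mul.
rewrite exprD dvdp_mul2l ?expf_neq0 ?w_neq0 // in h7.
by rewrite -hmod modp_eq0.
Qed.

Lemma dense_inter (I : (nat -> nat) -> Prop) : (forall k, I k -> isZp p k) -> Zp_dense p I ->
  forall l : Lam w, (forall k, I k -> inP k l) -> forall m r, l m r = 0.
Proof.
move=> HI Hd l hl.
have hp0 : (0 < p)%N by rewrite ltnW // p_gt1.
have z0 : isZp p (fun _ => 0%N).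
  by move=> t; rewrite expn_gt0 hp0 mod0n.
have [t [It _ _]] := Hd _ z0 0%N.
have L := (hl t It).1.
apply: injective_iota => // s hs m.
have [t' [It' _ e]] := Hd s hs m.
have := (hl t' It').2 m.
by rewrite /fk /iotaL e.
Qed.
End Basics.

Unset Implicit Arguments.
Set Strict Implicit.

Theorem mainTheorem9 (F : finFieldType) (p : nat) (w : {poly F})
    (Hp : p \in [pchar F]) (Hmonic : w \is monic) (Hirr : irreducible_poly w) :
  (* Lambda_0 is closed under its ring / A_p-module operations *)
  (isLam (Lam_zero w) /\ isLam (Lam_one w)) /\
  [/\ (forall l1 l2 : Lam w, isLam l1 -> isLam l2 -> isLam (Lam_add l1 l2)),
      (forall l1 l2 : Lam w, isLam l1 -> isLam l2 -> isLam (Lam_mul l1 l2)),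
      (forall (a : Ap F) (l : Lam w), isAp w a -> isLam l -> isLam (Lam_scale a l))
    & (forall u : Ap F, principal w u -> isLam (dirac w u))] /\
  (* iotaL lands in C(Z_p, A_p) *)
  (forall l : Lam w, isLam l ->
     (forall s, isZp p s -> isAp w (iotaL l s)) /\ continuousZA p (iotaL l)) /\
  (* iotaL is a ring homomorphism, A_p-linear, with [u] |-> (s |-> u^s) *)
  [/\ (forall s, isZp p s -> forall m, iotaL (Lam_one w) s m = Ap_one w m),
      (forall l1 l2 : Lam w, isLam l1 -> isLam l2 -> forall s, isZp p s -> forall m,
         iotaL (Lam_add l1 l2) s m = Ap_add (iotaL l1 s) (iotaL l2 s) m),
      (forall l1 l2 : Lam w, isLam l1 -> isLam l2 -> forall s, isZp p s -> forall m,
         iotaL (Lam_mul l1 l2) s m = Ap_mul w (iotaL l1 s) (iotaL l2 s) m),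
      (forall (a : Ap F) (l : Lam w), isAp w a -> isLam l -> forall s, isZp p s ->
         forall m, iotaL (Lam_scale a l) s m = Ap_mul w a (iotaL l s) m)
    & (forall u : Ap F, principal w u -> forall s, isZp p s -> forall m,
         iotaL (dirac w u) s m = upow w u s m)] /\
  (* iotaL is injective *)
  (forall l : Lam w, isLam l ->
     (forall s, isZp p s -> forall m, iotaL l s m = 0) ->
     forall m r, l m r = 0) /\
  (* for every dense I in Z_p, the intersection of the P_k (k in I) is 0 *)
  (forall I : (nat -> nat) -> Prop, (forall k, I k -> isZp p k) -> Zp_dense p I ->
     forall l : Lam w, (forall k, I k -> inP k l) -> forall m r, l m r = 0).
Proof.
split; first by split; [exact: isLam_zero | exact: isLam_one].
split.
  split.
  - exact: isLam_add.
  - exact: isLam_mul.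
  - exact: isLam_scale.
  - exact: isLam_dirac.
split.
  by move=> l L; split; [move=> s hs; exact: (iota_isAp Hirr Hp) | exact: iota_cont].
split.
  split.
  - by move=> s _ m; exact: iota_one.
  - by move=> *; exact: iota_add.
  - by move=> l1 l2 L1 L2 s _ m; exact: iota_mul.
  - by move=> *; exact: iota_scale.
  - by move=> u hu s _ m; exact: iota_dirac.
split.
  exact: (injective_iota Hirr Hp).
exact: (dense_inter Hirr Hp).
Qed.
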